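(* Let $G=(V,E)$ be a finite connected graph, $G'=(V',E')$ a connected subgraph, $F\subset E$, $q\ge1$, $\kappa\in\{1,q\}^E$ and $f\in E'\setminus F$. Then $$\frac{\det\Delta^{G'}_{\kappa_f^+}}{\det\Delta^{G'}_{\kappa_f^-}}\ \ge\ \frac{\det\Delta^{G}_{\kappa_f^+}}{\det\Delta^{G}_{\kappa_f^-}}\ \ge\ \frac{\det\Delta^{G/F}_{\kappa_f^+}}{\det\Delta^{G/F}_{\kappa_f^-}}.$$
   Context: For a finite connected (multi)graph $H$ with conductances $c$ on its edges, $\Delta^H_cf(x)=\sum_{e=\{x,y\}}c_e(f(x)-f(y))$ (sum over edges incident to $x$; loops contribute nothing) acting on $\{f:\mathbf V(H)\to\mathbb R:\sum_xf(x)=0\}$, and $\det\Delta^H_c$ is its determinant. $\Delta^{G'}_\kappa$ uses the restriction of $\kappa$ to $E'$. $G/F$ is the multigraph obtained by identifying the two endpoints of every $f'\in F$ (its edges are identified with $E\setminus F$, possibly including loops), with conductances $\kappa$ restricted to $E\setminus F$. $\kappa^+_f$ ($\kappa^-_f$) is the configuration equal to $\kappa$ except that its value at $f$ is $q$ (resp. $1$). *)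

(* Defs.v *)
From HB Require Import structures.
From mathcomp Require Import all_boot all_order all_algebra.
Set Implicit Arguments. Unset Strict Implicit. Unset Printing Implicit Defensive.
Import Order.TTheory GRing.Theory Num.Theory.
Local Open Scope ring_scope.

(* A finite multigraph H is given by a vertex set VS : {set V}, an edge set
   ES : {set E} and an endpoint map ends : E -> V * V (loops allowed,
   parallel edges allowed).  Conductances c : E -> R. *)

Section Lap.
Variables (R : comNzRingType) (V E : finType).

(* The weighted Laplacian operator:
   (Delta_c g)(x) = sum_{e in ES incident to x} c_e (g x - g (other end)).
   A loop at x contributes c_e((g x - g x) + (g x - g x)) = 0. *)
Definition lap_op (ES : {set E}) (ends : E -> V * V) (c : E -> R)
    (g : V -> R) (x : V) : R :=
  \sum_(e in ES) c e *
     (((ends e).1 == x)%:R * (g x - g (ends e).2)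
      + ((ends e).2 == x)%:R * (g x - g (ends e).1)).

(* Determinant of Delta_c acting on {g : VS -> R | sum_{x in VS} g x = 0},
   computed as the determinant of its matrix in the basis
   (delta_y - delta_x0)_{y in VS \ x0}, where x0 is a chosen vertex.
   Since every g in that space equals sum_{x <> x0} g(x) (delta_x - delta_x0),
   the coordinate of g on delta_x - delta_x0 is g x.  For an empty vertex set
   the space is trivial and the determinant is 1. *)
Definition lapdet (VS : {set V}) (ES : {set E}) (ends : E -> V * V)
    (c : E -> R) : R :=
  match [pick x in VS] with
  | None => 1
  | Some x0 =>
      let W := VS :\ x0 in
      \det (\matrix_(i < #|W|, j < #|W|)
              lap_op ES ends c
                (fun v => (v == enum_val j)%:R - (v == x0)%:R)
                (enum_val i))
  end.
End Lap.

Section Graph.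
Variables (V E : finType).

Definition gadj (ES : {set E}) (ends : E -> V * V) : rel V :=
  fun x y => [exists e in ES, (ends e == (x, y)) || (ends e == (y, x))].

Definition is_graph (VS : {set V}) (ES : {set E}) (ends : E -> V * V) : Prop :=
  forall e, e \in ES -> ((ends e).1 \in VS) && ((ends e).2 \in VS).

Definition gconnected (VS : {set V}) (ES : {set E}) (ends : E -> V * V) : Prop :=
  VS != set0 /\ {in VS &, forall x y, connect (gadj ES ends) x y}.

(* Contraction G/F: vertices of G/F are the classes of the equivalence
   generated by the edges of F, represented by their canonical root;
   edges are E \ F, with endpoints mapped to the classes. *)
Definition contr_root (F : {set E}) (ends : E -> V * V) (x : V) : V :=
  fingraph.root (gadj F ends) x.
Definition contr_V (F : {set E}) (ends : E -> V * V) : {set V} :=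
  [set contr_root F ends x | x in [set: V]].
Definition contr_E (F : {set E}) : {set E} := ~: F.
Definition contr_ends (F : {set E}) (ends : E -> V * V) (e : E) : V * V :=
  (contr_root F ends (ends e).1, contr_root F ends (ends e).2).
End Graph.

Definition kset (R : nzRingType) (E : finType) (kappa : E -> R) (f : E) (v : R)
  : E -> R := fun e => if e == f then v else kappa e.

(* Main.v *)
Require Import Defs.
From HB Require Import structures.
From mathcomp Require Import all_boot all_order all_algebra.
From mathcomp Require Import ring lra.
Set Implicit Arguments. Unset Strict Implicit. Unset Printing Implicit Defensive.
Import Order.TTheory GRing.Theory Num.Theory.
Local Open Scope ring_scope.
Lemma det_rank1 (R : comNzRingType) n (X : 'M[R]_(n,1)) (Z : 'M[R]_(1,n)) :
  \det (1%:M + X *m Z) = 1 + (Z *m X) 0 0.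
Proof.
pose B := block_mx (1%:M : 'M[R]_1) (- Z) X (1%:M : 'M[R]_n).
pose C := block_mx (1%:M : 'M[R]_1) Z 0 (1%:M : 'M[R]_n).
have dC : \det C = 1 by rewrite /C det_ublock !det1 mulr1.
have e1 : B *m C = block_mx 1%:M 0 X (1%:M + X *m Z).
  rewrite /B /C mulmx_block !mulmx0 !mul1mx !mulmx1 ?addr0 ?addrN ?add0r [X *m Z + _]addrC.
  by [].
have e2 : C *m B = block_mx (1%:M + Z *m X) 0 X 1%:M.
  rewrite /B /C mulmx_block !mul0mx !mul1mx !mulmx1 ?add0r ?addr0 addNr.
  by [].
have := congr1 determinant e1; rewrite det_mulmx dC mulr1 det_lblock det1 mul1r => <-.
have := congr1 determinant e2; rewrite det_mulmx dC mul1r det_lblock det1 mulr1 => ->.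
by rewrite det_mx11 !mxE.
Qed.

Lemma pd_rank1 (R : realFieldType) n (A : 'M[R]_n) (u : 'rV[R]_n) (t : R) :
  A^T = A -> (forall y : 'rV_n, y != 0 -> 0 < (y *m A *m y^T) 0 0) ->
  exists r, [/\ \det A != 0,
     \det (A + t *: (u^T *m u)) = \det A * (1 + t * r),
     (forall y : 'rV_n, 2 * (y *m u^T) 0 0 - (y *m A *m y^T) 0 0 <= r) &
     exists y : 'rV_n, 2 * (y *m u^T) 0 0 - (y *m A *m y^T) 0 0 = r].
Proof.
move=> sA pd.
have dA : \det A != 0.
  apply/negP => /det0P [v nz vA]; have := pd v nz; by rewrite vA mul0mx mxE ltxx.
have Au : A \in unitmx by rewrite unitmxE unitfE.
pose z := u *m invmx A.
have zA : z *m A = u by rewrite /z mulmxKV.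
have bs : forall y w : 'rV_n, (y *m A *m w^T) = (w *m A *m y^T).
  move=> y w; have -> : (y *m A *m w^T) = ((y *m A *m w^T)^T).
    by apply/matrixP => i j; rewrite !ord1 [RHS]mxE.
  by rewrite !trmx_mul trmxK sA mulmxA.
have uT : u^T = A *m z^T by rewrite -zA trmx_mul sA.
have key : forall y, 2 * (y *m u^T) 0 0 - (y *m A *m y^T) 0 0
    = (z *m u^T) 0 0 - ((y - z) *m A *m (y - z)^T) 0 0.
  move=> y; rewrite uT !mulmxA linearB /= mulmxBl !mulmxBr !mulmxBl.
  rewrite (bs z y).
  move: (y *m A *m y^T) (y *m A *m z^T) (z *m A *m z^T) => a b c.
  rewrite !mxE; lra.
exists ((z *m u^T) 0 0); split => //.
- have -> : A + t *: (u^T *m u) = (1%:M + (t *: u^T) *m z) *m A.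
    by rewrite mulmxDl mul1mx -mulmxA zA scalemxAl.
  rewrite det_mulmx det_rank1 -scalemxAr mxE mulrC.
  by congr (_ * (1 + _)).
- move=> y; rewrite key lerBlDr lerDl.
  have [->|nz] := eqVneq (y - z) 0; first by rewrite !mul0mx mxE.
  exact/ltW/pd.
- by exists z; rewrite key subrr !mul0mx !mxE subr0.
Qed.

Section G.
Variables (R : realFieldType) (V E : finType).
Implicit Types (VS : {set V}) (ES : {set E}) (ends : E -> V * V) (c : E -> R).

Definition beta ends (e : E) (x : V) : R :=
  ((ends e).1 == x)%:R - ((ends e).2 == x)%:R.

Definition energy ES ends c (g : V -> R) : R :=
  \sum_(e in ES) c e * (g (ends e).1 - g (ends e).2) ^+ 2.

Definition score ES ends c (f : E) (g : V -> R) : R :=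
  2 * (g (ends f).1 - g (ends f).2) - energy ES ends c g.

Lemma term_eq (a b x : V) (g : V -> R) :
  (a == x)%:R * (g x - g b) + (b == x)%:R * (g x - g a)
  = ((a == x)%:R - (b == x)%:R) * (g a - g b).
Proof.
case: (eqVneq a x) => [ax|nax]; case: (eqVneq b x) => [bx|nbx] /=.
- by subst; rewrite !subrr !mulr0 addr0.
- by subst; ring.
- by subst; ring.
- by ring.
Qed.

Lemma lapE ES ends c g x :
  lap_op ES ends c g x = \sum_(e in ES) c e * (beta ends e x * (g (ends e).1 - g (ends e).2)).
Proof. by apply: eq_bigr => e _; rewrite term_eq. Qed.

Lemma beta_delta ends e (y : V) :
  (((ends e).1 == y)%:R - ((ends e).2 == y)%:R : R) = beta ends e y.
Proof. by []. Qed.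

Lemma score_ext ES ends c f (g1 g2 : V -> R) VS :
  is_graph VS ES ends -> f \in ES -> {in VS, forall v, g1 v = g2 v} ->
  score ES ends c f g1 = score ES ends c f g2.
Proof.
move=> gr fE eq12; rewrite /score /energy.
have /andP [f1 f2] := gr f fE; rewrite !eq12 //; congr (_ - _).
apply: eq_bigr => e eE; have /andP [e1 e2] := gr e eE.
by rewrite !eq12.
Qed.

Lemma score_shift ES ends c f (g : V -> R) k :
  score ES ends c f (fun v => g v - k) = score ES ends c f g.
Proof.
rewrite /score /energy; have H : forall a b, (g a - k) - (g b - k) = g a - g b.
  by move=> a b; ring.
rewrite H; congr (_ - _); apply: eq_bigr => e _; by rewrite H.
Qed.

Lemma sum_ind (W : {set V}) (a : V) :
  \sum_(w in W) ((a == w)%:R : R) = (a \in W)%:R.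
Proof.
case: (boolP (a \in W)) => aW.
  rewrite (bigD1 a) //= eqxx big1 ?addr0 // => w /andP [_ wa].
  by rewrite eq_sym (negbTE wa).
rewrite big1 // => w wW; have /negbTE -> // : a != w.
by apply: contraNneq aW => ->.
Qed.

Section H.
Variables (VS : {set V}) (ES : {set E}) (ends : E -> V * V) (x0 : V).
Hypothesis gr : is_graph VS ES ends.
Hypothesis x0in : x0 \in VS.

Definition W := VS :\ x0.
Definition vv (i : 'I_#|W|) : V := enum_val i.
Definition bvec (e : E) : 'rV[R]_#|W| := \row_i beta ends e (vv i).
Definition Amx (c : E -> R) : 'M[R]_#|W| :=
  \sum_(e in ES) c e *: ((bvec e)^T *m bvec e).
Definition Pmx : 'M[R]_#|W| := 1%:M + const_mx 1.

Lemma Aij c i j : Amx c i j = \sum_(e in ES) c e * (beta ends e (vv i) * beta ends e (vv j)).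
Proof.
rewrite summxE; apply: eq_bigr => e _.
by rewrite mxE mxE big_ord1 !mxE.
Qed.

Lemma sum_beta e : e \in ES ->
  \sum_(k < #|W|) beta ends e (vv k) = - beta ends e x0.
Proof.
move=> eE; have /andP [e1 e2] := gr eE.
rewrite /vv -(big_enum_val (A := mem W) (fun w => beta ends e w)) /beta sumrB !sum_ind.
rewrite /W !in_setD1 e1 e2 !andbT.
by case: ((ends e).1 == x0); case: ((ends e).2 == x0) => /=; ring.
Qed.

Lemma Mdef c : \matrix_(i < #|W|, j < #|W|)
   lap_op ES ends c (fun v => (v == vv j)%:R - (v == x0)%:R) (vv i) = Amx c *m Pmx.
Proof.
apply/matrixP => i j; rewrite /Pmx mulmxDr mulmx1 !mxE lapE Aij.
under [X in _ = _ + X]eq_bigr => k _ do rewrite mxE mulr1 Aij.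
rewrite exchange_big /= -big_split /=; apply: eq_bigr => e eE.
rewrite -mulr_sumr -mulr_sumr sum_beta // /beta; ring.
Qed.

Lemma detP : \det Pmx != 0.
Proof.
set n := #|W|.
pose J : 'M[R]_n := const_mx 1.
have JJ : J *m J = n%:R *: J.
  apply/matrixP => i j; rewrite !mxE.
  under eq_bigr => k _ do rewrite !mxE mulr1.
  by rewrite sumr_const card_ord mulr1.
pose s : R := (n.+1%:R)^-1.
have hs : - s + (1 - s * n%:R) = 0.
  rewrite /s; have h : (n.+1%:R : R) != 0 by rewrite pnatr_eq0.
  by field; rewrite addrC natr1.
have : Pmx *m (1%:M - s *: J) = 1%:M.
  rewrite /Pmx -/J mulmxDl mul1mx !mulmxBr !mulmx1 -scalemxAr JJ scalerA.
  have -> : J - (s * n%:R) *: J = (1 - s * n%:R) *: J by rewrite scalerBl scale1r.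
  by rewrite -addrA -scaleNr -scalerDl hs scale0r addr0.
case/mulmx1_unit => + _; by rewrite unitmxE unitfE.
Qed.

Lemma A_update c1 cq f t : f \in ES ->
  (forall e, cq e = c1 e + t * (e == f)%:R) ->
  Amx cq = Amx c1 + t *: ((bvec f)^T *m bvec f).
Proof.
move=> fE cqE; rewrite /Amx.
under eq_bigr => e _ do rewrite cqE scalerDl.
rewrite big_split /=; congr (_ + _).
rewrite (bigD1 f) //= eqxx mulr1 big1 ?addr0 // => e /andP [_ ef].
by rewrite (negbTE ef) mulr0 scale0r.
Qed.

Lemma A_sym c : (Amx c)^T = Amx c.
Proof.
rewrite /Amx linear_sum; apply: eq_bigr => e _.
by rewrite linearZ /= trmx_mul trmxK.
Qed.

Definition hfun (y : 'rV[R]_#|W|) : V -> R :=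
  fun v => \sum_i y 0 i * (v == vv i)%:R.

Lemma yb y e : (y *m (bvec e)^T) 0 0 = hfun y (ends e).1 - hfun y (ends e).2.
Proof.
rewrite mxE /hfun -sumrB; apply: eq_bigr => i _.
by rewrite !mxE /beta mulrBr.
Qed.

Lemma quad c y : (y *m Amx c *m y^T) 0 0 = energy ES ends c (hfun y).
Proof.
rewrite /Amx mulmx_sumr mulmx_suml summxE /energy; apply: eq_bigr => e _.
rewrite -scalemxAr -scalemxAl mxE; congr (_ * _).
rewrite !mulmxA -(mulmxA (y *m _)) mxE big_ord1 yb.
have -> : (bvec e *m y^T) 0 0 = ((y *m (bvec e)^T)^T) 0 0.
  by rewrite trmx_mul trmxK.
by rewrite mxE yb expr2.
Qed.

Lemma hvv y k : hfun y (vv k) = y 0 k.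
Proof.
rewrite /hfun (bigD1 k) //= eqxx mulr1 big1 ?addr0 // => i ik.
by rewrite (inj_eq enum_val_inj) eq_sym (negbTE ik) mulr0.
Qed.

Lemma hx0 y : hfun y x0 = 0.
Proof.
rewrite /hfun big1 // => i _.
have : vv i \in W by apply: enum_valP.
by rewrite /W in_setD1 eq_sym => /andP [/negbTE -> _]; rewrite mulr0.
Qed.

Lemma vv_in k : vv k \in VS.
Proof. by have := enum_valP k; rewrite /W in_setD1 => /andP []. Qed.

Lemma A_pd c : gconnected VS ES ends -> (forall e, 0 < c e) ->
  forall y : 'rV_#|W|, y != 0 -> 0 < (y *m Amx c *m y^T) 0 0.
Proof.
move=> [_ conn] cpos y ny0; rewrite quad /energy.
have ge0 : forall e, e \in ES -> 0 <= c e * (hfun y (ends e).1 - hfun y (ends e).2) ^+ 2.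
  by move=> e _; rewrite mulr_ge0 ?sqr_ge0 // ltW.
rewrite lt0r sumr_ge0 ?andbT //; apply: contra ny0 => /eqP E0.
have he : forall e, e \in ES -> hfun y (ends e).1 = hfun y (ends e).2.
  move=> e eE; have := psumr_eq0P ge0 E0 eE.
  move/eqP; rewrite mulf_eq0 (gt_eqF (cpos e)) /= sqrf_eq0 subr_eq0 => /eqP //.
have cl : closed (gadj ES ends) [pred v | hfun y v == 0].
  move=> a b /existsP [e /andP [eE /orP [] /eqP ee]]; have := he e eE;
  rewrite ee /= !inE => ->  //.
apply/eqP/matrixP => i k; rewrite !ord1 mxE -hvv.
have := closed_connect cl (conn x0 (vv k) x0in (vv_in k)).
by rewrite !inE hx0 eqxx => /esym /eqP.
Qed.

Lemma score_y c f y : f \in ES ->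
  2 * (y *m (bvec f)^T) 0 0 - (y *m Amx c *m y^T) 0 0 = score ES ends c f (hfun y).
Proof. by move=> fE; rewrite yb quad. Qed.

Lemma score_le c f (g : V -> R) : f \in ES ->
  exists y, score ES ends c f g = score ES ends c f (hfun y).
Proof.
move=> fE; exists (\row_i (g (vv i) - g x0)).
rewrite -(score_shift _ _ _ _ g (g x0)); apply: (score_ext c gr fE) => v vS.
case: (eqVneq v x0) => [->|nv]; first by rewrite hx0 subrr.
have vW : v \in W by rewrite /W in_setD1 nv.
by rewrite -{1 2}(enum_rankK_in vW vW) -/(vv _) hvv mxE.
Qed.

End H.

Lemma gen VS ES ends (c1 cq : E -> R) f q :
  is_graph VS ES ends -> gconnected VS ES ends -> (forall e, 0 < c1 e) -> f \in ES ->
  (forall e, cq e = c1 e + (q - 1) * (e == f)%:R) ->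
  exists r, [/\ lapdet VS ES ends cq / lapdet VS ES ends c1 = 1 + (q - 1) * r,
    forall g, score ES ends c1 f g <= r & exists g, score ES ends c1 f g = r].
Proof.
move=> gr gc c1pos fE cqE.
have [ne _] := gc.
rewrite /lapdet; case: pickP => [x0 x0in|none]; last first.
  by case/set0Pn: ne => x; rewrite none.
have := Mdef x0 gr cq; have := Mdef x0 gr c1.
rewrite /vv /W => -> ->.
rewrite !det_mulmx.
have [r [dA detq ineq [y yeq]]] := pd_rank1 (bvec VS ends x0 f) (q - 1)
  (A_sym VS ES ends x0 c1) (A_pd x0in gc c1pos).
have dP := detP VS x0.
exists r; split.
- rewrite (A_update VS ends x0 fE cqE) detq; field.
  by rewrite dP dA.
- move=> g; have [y' ->] := score_le x0 gr c1 g fE.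
  by rewrite -(score_y ends c1 y' fE); apply: ineq.
- by exists (hfun y); rewrite -(score_y ends c1 y fE) yeq.
Qed.

Lemma gadj_sym ES ends : symmetric (gadj ES ends).
Proof. by move=> x y; apply: eq_existsb => e; rewrite orbC. Qed.

Lemma gadj_edge ES ends e : e \in ES -> gadj ES ends (ends e).1 (ends e).2.
Proof. by move=> eE; apply/existsP; exists e; rewrite eE -surjective_pairing eqxx. Qed.

Lemma root_F (F : {set E}) ends e : e \in F ->
  contr_root F ends (ends e).1 = contr_root F ends (ends e).2.
Proof.
move=> eF; rewrite /contr_root; apply/eqP; rewrite (root_connect (sym_connect_sym (gadj_sym F ends))).
exact/connect1/gadj_edge.
Qed.

Lemma energy_sub ES ends c (g : V -> R) : (forall e, 0 <= c e) ->
  energy ES ends c g <= energy [set: E] ends c g.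
Proof.
move=> cge; rewrite /energy big_mkcond /= [X in _ <= X]big_mkcond /=.
apply: ler_sum => e _; rewrite in_setT.
case: (e \in ES) => //; by rewrite mulr_ge0 ?sqr_ge0.
Qed.

Lemma score_contr (F : {set E}) ends c f (g : V -> R) :
  score (contr_E F) (contr_ends F ends) c f g
  = score [set: E] ends c f (fun v => g (contr_root F ends v)).
Proof.
rewrite /score /energy /=; congr (_ - _).
rewrite big_mkcond [RHS]big_mkcond /=; apply: eq_bigr => e _.
rewrite in_setT /contr_E inE.
case: (boolP (e \in F)) => //= eF.
by rewrite (root_F ends eF) subrr expr0n mulr0.
Qed.

Lemma contr_graph (F : {set E}) ends : is_graph (contr_V F ends) (contr_E F) (contr_ends F ends).
Proof. by move=> e _; rewrite /contr_V /= !imset_f ?in_setT. Qed.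

Lemma contr_conn (F : {set E}) ends : gconnected [set: V] [set: E] ends ->
  gconnected (contr_V F ends) (contr_E F) (contr_ends F ends).
Proof.
move=> [ne conn]; split.
  case/set0Pn: ne => x _; apply/set0Pn; exists (contr_root F ends x).
  by rewrite /contr_V imset_f ?in_setT.
set gF := gadj (contr_E F) (contr_ends F ends).
have sF : connect_sym gF := sym_connect_sym (gadj_sym _ _).
have step : forall z w, gadj [set: E] ends z w ->
    connect gF (contr_root F ends z) (contr_root F ends w).
  move=> z w /existsP [e /andP [_ /orP [] /eqP ee]].
  - case: (boolP (e \in F)) => eF.
      by have := root_F ends eF; rewrite ee /= => ->; apply: connect0.
    apply: connect1; have := gadj_edge (ES := contr_E F) (contr_ends F ends) (e := e).
    by rewrite /contr_E inE eF /contr_ends ee /=; apply.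
  - case: (boolP (e \in F)) => eF.
      by have := root_F ends eF; rewrite ee /= => ->; apply: connect0.
    rewrite sF; apply: connect1; have := gadj_edge (ES := contr_E F) (contr_ends F ends) (e := e).
    by rewrite /contr_E inE eF /contr_ends ee /=; apply.
move=> x' y' /imsetP [x _ ->] /imsetP [y _ ->].
have cl : closed (gadj [set: E] ends) [pred z | connect gF (contr_root F ends x) (contr_root F ends z)].
  move=> z w zw; rewrite !inE; apply/idP/idP => H.
    exact: connect_trans H (step _ _ zw).
  by apply: (connect_trans H); rewrite sF; apply: step.
have := closed_connect cl (conn x y (in_setT x) (in_setT y)).
by rewrite !inE connect0 => <-.
Qed.

End G.

Unset Implicit Arguments.
Theorem lemma4p8 (R : realFieldType) (V E : finType) (ends : E -> V * V)
  (V' : {set V}) (E' : {set E}) (F : {set E}) (q : R) (kappa : E -> R) (f : E) :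
  gconnected [set: V] [set: E] ends ->
  is_graph V' E' ends ->
  gconnected V' E' ends ->
  1 <= q ->
  (forall e, kappa e = 1 \/ kappa e = q) ->
  f \in E' -> f \notin F ->
  lapdet V' E' ends (kset kappa f q) / lapdet V' E' ends (kset kappa f 1)
    >= lapdet [set: V] [set: E] ends (kset kappa f q)
       / lapdet [set: V] [set: E] ends (kset kappa f 1)
  /\
  lapdet [set: V] [set: E] ends (kset kappa f q)
       / lapdet [set: V] [set: E] ends (kset kappa f 1)
    >= lapdet (contr_V F ends) (contr_E F) (contr_ends F ends) (kset kappa f q)
       / lapdet (contr_V F ends) (contr_E F) (contr_ends F ends) (kset kappa f 1).
Proof.
move=> gcG grG' gcG' q1 kap fE' fF.
set c1 := kset kappa f 1; set cq := kset kappa f q.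
have cqE : forall e, cq e = c1 e + (q - 1) * (e == f)%:R.
  move=> e; rewrite /cq /c1 /kset; case: (e == f) => /=.
    by rewrite mulr1 addrC subrK.
  by rewrite mulr0 addr0.
have c1pos : forall e, 0 < c1 e.
  move=> e; rewrite /c1 /kset; case: ifP => _ //; case: (kap e) => ->; lra.
have gG : is_graph [set: V] [set: E] ends by move=> e _; rewrite !in_setT.
have [rG [eG leG [gstar sG]]] := gen gG gcG c1pos (in_setT f) cqE.
have [rP [eP leP [gP sP]]] := gen grG' gcG' c1pos fE' cqE.
have fC : f \in contr_E F by rewrite /contr_E inE fF.
have [rC [eC leC [gC sC]]] := gen (@contr_graph _ _ F ends) (contr_conn F gcG) c1pos fC cqE.
rewrite eG eP eC; split; rewrite lerD2l ler_wpM2l ?subr_ge0 //.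
- rewrite -sG; apply: le_trans (leP gstar); rewrite /score; apply: lerB => //.
  by apply: energy_sub => e; apply: ltW.
- by rewrite -sC score_contr; apply: leG.
Qed.
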